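(* Let $N\ge 2$ and $K\ge 0$ be integers and let $f_0,f_1,\ldots,f_K$ be integers such that the map $f:\{0,1,\ldots,N-1\}\to\{0,1,\ldots,N-1\}$, $f(x)=\left(\sum_{i=0}^{K} f_i x^i\right) \bmod N$, is a permutation of $\{0,1,\ldots,N-1\}$. Then the interleaver $f$ is maximum contention-free.
   Context: An interleaver of length $N$ is a permutation $f$ of $\{0,1,\ldots,N-1\}$; let $g=f^{-1}$ denote its inverse (the deinterleaver). For a positive integer $W$ dividing $N$, put $M=N/W$. The interleaver $f$ is called contention-free for window size $W$ if for both $\pi=f$ and $\pi=g$ we have $\lfloor \pi(j+tW)/W\rfloor \neq \lfloor \pi(j+vW)/W\rfloor$ for all integers $j,t,v$ with $0\le j<W$ and $0\le t<v<M$. The interleaver is called maximum contention-free if it is contention-free for every window size $W$ that is a positive divisor of $N$. Here $a \bmod N$ denotes the representative of $a$ modulo $N$ in $\{0,\ldots,N-1\}$. *)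

(* Defs.v *)
From mathcomp Require Import all_boot all_order all_algebra.
Set Implicit Arguments. Unset Strict Implicit. Unset Printing Implicit Defensive.
Import Order.TTheory GRing.Theory Num.Theory.

Definition is_perm_on (N : nat) (f : nat -> nat) : Prop :=
  (forall x, x < N -> f x < N) /\
  (forall x y, x < N -> y < N -> f x = f y -> x = y).

(* The inverse (deinterleaver) g = f^{-1}: g y is the unique x < N with f x = y
   (found by linear search; equals N if no such x exists). *)
Definition inv_on (N : nat) (f : nat -> nat) (y : nat) : nat :=
  find (fun x => f x == y) (iota 0 N).

Definition cf_cond (N W : nat) (pi : nat -> nat) : Prop :=
  forall j t v, j < W -> t < v -> v < N %/ W ->
    pi (j + t * W) %/ W <> pi (j + v * W) %/ W.

Definition contention_free (N W : nat) (f : nat -> nat) : Prop :=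
  cf_cond N W f /\ cf_cond N W (inv_on N f).

Definition max_contention_free (N : nat) (f : nat -> nat) : Prop :=
  forall W, 0 < W -> W %| N -> contention_free N W f.

Definition poly_interleaver (N K : nat) (c : nat -> int) (x : nat) : nat :=
  `| ((\sum_(i < K.+1) c i * (x%:Z) ^+ i) %% (N%:Z))%Z |%N.

(* Main.v *)
Require Import Defs.
From mathcomp Require Import all_boot all_order all_algebra zify ring.
Import Order.TTheory GRing.Theory Num.Theory.

Lemma key (N K W : nat) (c : nat -> int) x y : 0 < N -> W %| N -> x = y %[mod W] ->
  poly_interleaver N K c x = poly_interleaver N K c y %[mod W].
Proof.
move=> N0 WN xy.
set P := fun z : nat => (\sum_(i < K.+1) c i * (Posz z) ^+ i)%R.
have E z : Posz (poly_interleaver N K c z) = (P z %% Posz N)%Z.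
  rewrite /poly_interleaver gez0_abs //; apply: modz_ge0; rewrite eqz_nat; lia.
have dW : (Posz W %| (Posz x - Posz y)%R)%Z.
  by rewrite -eqz_mod_dvd !modz_nat xy.
have dN : (Posz W %| Posz N)%Z by rewrite dvdzE.
apply/eqP; rewrite -(eqz_nat (_ %% _)) -!modz_nat eqz_mod_dvd !E.
have -> : ((P x %% Posz N)%Z - (P y %% Posz N)%Z =
   (P x - P y) - (P x %/ Posz N)%Z * Posz N + (P y %/ Posz N)%Z * Posz N)%R.
  rewrite {2}(divz_eq (P x) (Posz N)) {2}(divz_eq (P y) (Posz N)); ring.
apply: rpredD; [apply: rpredB; [|exact: dvdz_mull] | exact: dvdz_mull].
rewrite /P /= -sumrB rpred_sum // => i _.
by rewrite -mulrBr subrXX dvdz_mull // dvdz_mulr.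
Qed.

Set Implicit Arguments. Unset Strict Implicit.
Lemma surj_on N (f : nat -> nat) : is_perm_on N f -> forall y, y < N -> exists2 x, x < N & f x = y.
Proof.
move=> [Hr Hi] y yN.
pose F (i : 'I_N) : 'I_N := Ordinal (Hr i (ltn_ord i)).
have Finj : injective F.
  by move=> i j /(congr1 val) /= /Hi E; apply: val_inj; apply: E.
have := injF_onto Finj (Ordinal yN) => /codomP [x /(congr1 val) /= ->].
by exists x.
Qed.

Lemma inv_onP N (f : nat -> nat) : is_perm_on N f -> forall y, y < N ->
  inv_on N f y < N /\ f (inv_on N f y) = y.
Proof.
move=> Hp y yN; have [x xN fx] := surj_on Hp yN.
have H : has (fun x => f x == y) (iota 0 N).
  by apply/hasP; exists x; [rewrite mem_iota | rewrite fx].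
have L : inv_on N f y < N by rewrite /inv_on -{2}(size_iota 0 N) -has_find.
split=> //; have := nth_find 0 H; rewrite -/(inv_on N f y) nth_iota //.
by rewrite add0n => /eqP.
Qed.

Lemma resid_inj N K c W x y : 0 < W -> W %| N -> is_perm_on N (poly_interleaver N K c) ->
  x < N -> y < N ->
  poly_interleaver N K c x = poly_interleaver N K c y %[mod W] -> x = y %[mod W].
Proof.
set f := poly_interleaver N K c.
move=> W0 WN Hp xN yN E.
have N0 : 0 < N by move: xN; lia.
have WleN : W <= N by apply: dvdn_leq.
pose h (r : 'I_W) : 'I_W := Ordinal (ltn_pmod (f r) W0).
have hsurj : forall s : 'I_W, s \in image h predT.
  move=> s; have [z zN fz] := surj_on Hp (leq_trans (ltn_ord s) WleN).
  apply/imageP; exists (Ordinal (ltn_pmod z W0)) => //; apply: val_inj => /=.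
  rewrite /f (key N K W c _ _ N0 WN (_ : z %% W = z %[mod W])) ?modn_mod //.
  by rewrite -/f fz modn_small.
have hinj : {in predT &, injective h}.
  apply/image_injP; rewrite eqn_leq; apply/andP; split.
    by apply: leq_trans (card_size _) _; rewrite size_image.
  by apply: subset_leq_card; apply/subsetP => s _; apply: hsurj.
have := hinj (Ordinal (ltn_pmod x W0)) (Ordinal (ltn_pmod y W0)) isT isT.
move=> /(_ _) /(congr1 val) /=; apply; apply: val_inj => /=.
rewrite /f (key N K W c _ _ N0 WN (_ : x %% W = x %[mod W])) ?modn_mod //.
by rewrite (key N K W c _ _ N0 WN (_ : y %% W = y %[mod W])) ?modn_mod.
Qed.

Theorem corollary1 (N K : nat) (c : nat -> int) :
  2 <= N ->
  is_perm_on N (poly_interleaver N K c) ->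
  max_contention_free N (poly_interleaver N K c).
Proof.
move=> N2 Hp W W0 WN.
set f := poly_interleaver N K c.
have NE : N = N %/ W * W by rewrite divnK.
have Hb : forall j t, j < W -> t < N %/ W -> j + t * W < N.
  move=> j t jW tM; rewrite [X in _ < X]NE.
  have : t.+1 * W <= N %/ W * W by rewrite leq_mul2r tM orbT.
  rewrite mulSn; lia.
have Hm : forall j t, (j + t * W) %% W = j %% W.
  by move=> j t; rewrite addnC modnMDl.
have Hinj : forall j t v, j < W -> t < N %/ W -> v < N %/ W -> t < v ->
    j + t * W <> j + v * W.
  move=> j t v _ _ _ tv E; have : t * W = v * W by lia.
  move/eqP; rewrite eqn_mul2r eqn0Ngt W0 /= => /eqP; lia.
have Hdm : forall a b, a %/ W = b %/ W -> a %% W = b %% W -> a = b.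
  by move=> a b E1 E2; rewrite (divn_eq a W) (divn_eq b W) E1 E2.
split=> j t v jW tv vM; have tM : t < N %/ W by apply: ltn_trans vM.
- move=> E; apply: (Hinj j t v jW tM vM tv).
  case: Hp => _ Hi; apply: Hi; try by apply: Hb.
  apply: Hdm => //; apply: key => //; first lia.
  by rewrite !Hm.
- move=> E; apply: (Hinj j t v jW tM vM tv).
  have [ga fa] := inv_onP Hp (Hb j t jW tM).
  have [gb fb] := inv_onP Hp (Hb j v jW vM).
  have G : inv_on N f (j + t * W) = inv_on N f (j + v * W).
    apply: Hdm => //.
    apply: (resid_inj W0 WN Hp ga gb).
    by rewrite fa fb !Hm.
  by rewrite -fa -fb G.
Qed.
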